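(* Let $(\Omega,\mu)$ be a measure space, $E\subset\Omega$ with $0<\mu E<\infty$, and let $(v_k)_{k\ge1}$ be a sequence in $L^2_{\mathbb R}(\Omega,\mu)$ such that $\sum_{k\ge1}|v_k(x)|^2\le M^2$ for all $x\in E$, for some constant $M$. Then (1) the map $V:f\mapsto((f,v_k))_{k\ge1}$ is a compact operator from $L^2(E,\mu)$ to $\ell^2$, and (2) the map $V^*:(c_k)_{k\ge1}\mapsto\sum_{k\ge1}c_kv_k|_E$ is a compact operator from $\ell^2$ to $L^2(E,\mu)$.
   Context: Functions in $L^2(E,\mu)$ are regarded as functions on $\Omega$ vanishing outside $E$, and $(f,g)=\int fg\,d\mu$. *)

(* Defs.v *)
From HB Require Import structures.
From mathcomp Require Import all_boot all_order all_algebra.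
From mathcomp Require Import all_classical all_reals all_analysis.
Set Implicit Arguments. Unset Strict Implicit. Unset Printing Implicit Defensive.
Import Order.TTheory GRing.Theory Num.Theory.
Import numFieldNormedType.Exports.
Local Open Scope classical_set_scope.
Local Open Scope ring_scope.

Definition sqL2 {d} {T : measurableType d} {R : realType}
  (mu : {measure set T -> \bar R}) (f : T -> R) : \bar R :=
  (\int[mu]_x ((f x) ^+ 2)%:E)%E.

Definition L2 {d} {T : measurableType d} {R : realType}
  (mu : {measure set T -> \bar R}) : set (T -> R) :=
  [set f | measurable_fun setT f /\ (sqL2 mu f < +oo)%E].

(* L^2(E, mu), regarded as functions on Omega vanishing outside E *)
Definition L2on {d} {T : measurableType d} {R : realType}
  (mu : {measure set T -> \bar R}) (E : set T) : set (T -> R) :=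
  [set f | L2 mu f /\ (forall x, ~ E x -> f x = 0)].

Definition L2norm {d} {T : measurableType d} {R : realType}
  (mu : {measure set T -> \bar R}) (f : T -> R) : R :=
  Num.sqrt (fine (sqL2 mu f)).

Definition L2inner {d} {T : measurableType d} {R : realType}
  (mu : {measure set T -> \bar R}) (f g : T -> R) : R :=
  fine (\int[mu]_x (f x * g x)%:E)%E.

Definition ell2 {R : realType} : set (nat -> R) :=
  [set c | (\sum_(k <oo) ((c k) ^+ 2)%:E < +oo)%E].

Definition ell2norm {R : realType} (c : nat -> R) : R :=
  Num.sqrt (fine (\sum_(k <oo) ((c k) ^+ 2)%:E)%E).

Definition compact_operator {R : realType} {X Y : lmodType R}
  (SX : set X) (nX : X -> R) (SY : set Y) (nY : Y -> R) (A : X -> Y) : Prop :=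
  [/\ (forall x, SX x -> SY (A x)),
      (forall (a : R) x y, SX x -> SX y ->
          A (a *: x + y) = a *: A x + A y)
    & (forall u : nat -> X, (forall n, SX (u n)) ->
         (exists B : R, forall n, nX (u n) <= B) ->
         exists (phi : nat -> nat) (y : Y),
           [/\ SY y, {homo phi : m n / (m < n)%N >-> (m < n)%N}
             & (fun n => nY (A (u (phi n)) - y)) @ \oo --> (0 : R)])].

Definition Vop {d} {T : measurableType d} {R : realType}
  (mu : {measure set T -> \bar R}) (v : nat -> T -> R) (f : T -> R) : nat -> R :=
  fun k => L2inner mu f (v k).

Definition Vpartial {d} {T : measurableType d} {R : realType}
  (E : set T) (v : nat -> T -> R) (c : nat -> R) (n : nat) : T -> R :=
  fun x => \1_E x * \sum_(k < n) c k * v k x.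

Definition Vstar {d} {T : measurableType d} {R : realType}
  (E : set T) (v : nat -> T -> R) (c : nat -> R) : T -> R :=
  fun x => \1_E x * limn (fun n => \sum_(k < n) c k * v k x).

(* Main.v *)
Require Import Defs.
From HB Require Import structures.
From mathcomp Require Import all_boot all_order all_algebra.
From mathcomp Require Import all_classical all_reals all_analysis.
From mathcomp Require Import measurable_realfun.
From mathcomp Require Import ring lra.
Set Implicit Arguments. Unset Strict Implicit. Unset Printing Implicit Defensive.
Import Order.TTheory GRing.Theory Num.Theory.
Import numFieldNormedType.Exports.
Local Open Scope classical_set_scope.
Local Open Scope ring_scope.

Lemma disc_le (R : realFieldType) (A B C : R) : 0 <= B ->
  (forall l, 0 <= A - 2 * l * C + l ^+ 2 * B) -> C ^+ 2 <= A * B.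
Proof.
move=> B0.
have [->|Bn0] := eqVneq B 0 => H.
  have [->|Cn0] := eqVneq C 0; first by rewrite expr0n mulr0.
  have := H ((A + 1) / (2 * C)).
  have -> : A - 2 * ((A + 1) / (2 * C)) * C + ((A + 1) / (2 * C)) ^+ 2 * 0 = -1.
    field; exact: Cn0.
  by rewrite lerNr oppr0 ler10.
have Bp : 0 < B by rewrite lt_neqAle eq_sym Bn0.
have := H (C / B).
have -> : A - 2 * (C / B) * C + (C / B) ^+ 2 * B = A - C ^+ 2 / B by field.
rewrite subr_ge0 ler_pdivrMr //.
Qed.

Lemma cs_sum (R : realFieldType) (m n : nat) (a b : nat -> R) :
  (\sum_(m <= k < n) a k * b k) ^+ 2 <=
  (\sum_(m <= k < n) a k ^+ 2) * (\sum_(m <= k < n) b k ^+ 2).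
Proof.
apply: disc_le; first by apply: sumr_ge0 => k _; exact: sqr_ge0.
move=> l.
have -> : \sum_(m <= k < n) a k ^+ 2 - 2 * l * (\sum_(m <= k < n) a k * b k)
   + l ^+ 2 * (\sum_(m <= k < n) b k ^+ 2) = \sum_(m <= k < n) (a k - l * b k) ^+ 2.
  rewrite !mulr_sumr -sumrN -!big_split /=.
  by apply: eq_bigr => k _; ring.
by apply: sumr_ge0 => k _; exact: sqr_ge0.
Qed.
Lemma tail_small (R : realType) (a : nat -> R) (S : R) :
  (forall k, 0 <= a k) -> (forall N, \sum_(0 <= k < N) a k <= S) ->
  forall e, 0 < e -> exists K, forall N, \sum_(K <= k < N) a k <= e.
Proof.
move=> a0 aS e e0.
have nd : nondecreasing_seq (series a).
  by apply/nondecreasing_seqP => n; rewrite /series /= big_nat_recr //= lerDl.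
have ub : has_ubound (range (series a)) by exists S => _ [n _ <-]; exact: aS.
have cv := nondecreasing_is_cvgn nd ub.
have le := nondecreasing_cvgn_le nd cv.
have cvl : series a @ \oo --> limn (series a) by exact: cv.
have [K _ HK] := proj1 (cvgrPdist_le _ _) cvl e e0.
exists K => N.
have HKK : `|limn (series a) - series a K| <= e := HK K (leqnn K).
have [KN|NK] := leqP K N; last first.
  rewrite big_geq; [exact: ltW | exact: ltnW].
have := le N; rewrite /series /= (big_cat_nat (leq0n K) KN) /=.
move: HKK; rewrite /series /=.
move=> h1 h2.
move: h1 => /ler_normlP [_] h3.
by apply: le_trans h3; rewrite lerBrDl.
Qed.

Lemma bw_bound (R : realType) (u : nat -> R) (C : R) :
  (forall n, `|u n| <= C) ->
  exists s : nat -> nat, (forall n, (s n < s n.+1)%N) /\ cvgn (u \o s).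
Proof.
move=> hC.
have bu : bounded_fun u.
  rewrite /= /bounded_near; near=> M => x _.
  apply: le_trans (hC x) _; near: M; apply: nbhs_pinfty_ge; exact: num_real.
have [f fi fc] := bolzano_weierstrass bu.
exists f; split => //.
by move=> n; have := (proj2 (increasing_seqP f) fi n).
Unshelve. all: by end_near. Qed.

Lemma strict_homo (f : nat -> nat) : (forall n, (f n < f n.+1)%N) ->
  {homo f : m n / (m < n)%N >-> (m < n)%N}.
Proof. by move=> h; apply: homo_ltn h => y x z; exact: ltn_trans. Qed.

Lemma strict_ge (f : nat -> nat) : (forall n, (f n < f n.+1)%N) -> forall n, (n <= f n)%N.
Proof.
move=> h; elim=> [|n IH] //; exact: leq_ltn_trans IH (h n).
Qed.

Lemma strict_le (f : nat -> nat) : (forall n, (f n < f n.+1)%N) ->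
  forall m n, (m <= n)%N -> (f m <= f n)%N.
Proof.
move=> h m n; rewrite leq_eqVlt => /orP[/eqP->//|mn].
by apply: ltnW; apply: strict_homo.
Qed.

Lemma cvg_subseq (R : realType) (u : nat -> R) (l : R) (r : nat -> nat) :
  u @ \oo --> l -> (forall n, (r n < r n.+1)%N) -> (u \o r) @ \oo --> l.
Proof.
move=> ul hr; apply: cvg_comp ul.
move=> A [N _ HA]; exists N => // n /= Nn; apply: HA => /=.
exact: leq_trans Nn (strict_ge hr n).
Qed.

Fixpoint iter_sel (sel : nat -> (nat -> nat) -> nat -> nat) (j : nat) : nat -> nat :=
  match j with 0 => id | j'.+1 => iter_sel sel j' \o sel j' (iter_sel sel j') end.

Lemma diag_extract (R : realType) (a : nat -> nat -> R) (C : nat -> R) :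
  (forall n k, `|a n k| <= C k) ->
  exists phi : nat -> nat, (forall n, (phi n < phi n.+1)%N) /\
     forall k, cvgn (fun n => a (phi n) k).
Proof.
move=> hC.
have hsel : forall jg : nat * (nat -> nat), exists s : nat -> nat,
    (forall n, (s n < s n.+1)%N) /\ cvgn (fun n => a (jg.2 (s n)) jg.1).
  by move=> [j g]; apply: (@bw_bound _ (fun n => a (g n) j) (C j)) => n; exact: hC.
have [sel0 hsel0] := choice hsel.
pose sel j g := sel0 (j, g).
pose psi := iter_sel sel.
have psiS : forall j, psi j.+1 = psi j \o sel j (psi j) by [].
have psi_inc : forall j n, (psi j n < psi j n.+1)%N.
  elim=> [|j IH] n //=.
  rewrite psiS /=; apply: strict_homo => //.
  exact: (hsel0 (j, psi j)).1.
have psi_cv : forall j, cvgn (fun n => a (psi j.+1 n) j).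
  by move=> j; exact: (hsel0 (j, psi j)).2.
have psi_fac : forall j m, exists t : nat -> nat, (forall n, psi (m + j) n = psi j (t n)).
  move=> j; elim=> [|m [t Ht]]; first by exists id.
  exists (t \o sel (m + j) (psi (m + j))) => n.
  by rewrite ?addSn psiS /= Ht.
exists (fun n => psi n n); split.
  move=> n; rewrite psiS /=.
  apply: (@leq_trans (psi n n.+1)); first exact: psi_inc.
  apply: strict_le => //; apply: strict_ge.
  exact: (hsel0 (n, psi n)).1.
move=> k.
have [r hr] : exists r : nat -> nat, forall n, psi (n + k.+1) (n + k.+1) = psi k.+1 (r n).
  have : forall n, exists m, psi (n + k.+1) (n + k.+1) = psi k.+1 m.
    by move=> n; have [t Ht] := psi_fac k.+1 n; exists (t (n + k.+1)).
  by move/choice => [r hr]; exists r.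
have r_inc : forall n, (r n < r n.+1)%N.
  move=> n; rewrite ltnNge; apply/negP => le.
  have h1 := strict_le (psi_inc k.+1) le.
  rewrite -hr -hr in h1.
  have h2 : (psi (n + k.+1) (n + k.+1) < psi (n.+1 + k.+1) (n.+1 + k.+1))%N.
    rewrite addSn psiS /=.
    apply: (@leq_trans (psi (n + k.+1) (n + k.+1).+1)); first exact: psi_inc.
    apply: strict_le => //; apply: strict_ge.
    exact: (hsel0 (n + k.+1, psi (n + k.+1))).1.
  by move: (leq_trans h2 h1); rewrite ltnn.
have [l hl] := (cvg_ex _).1 (psi_cv k).
apply/cvg_ex; exists l.
rewrite -(cvg_shiftn k.+1) /=.
have -> : (fun n => a (psi (n + k.+1) (n + k.+1)) k) = (fun n => a (psi k.+1 n) k) \o r.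
  by apply/funext => n /=; rewrite hr.
exact: cvg_subseq hl r_inc.
Qed.

Lemma cvg_finsum (R : realType) (f : nat -> nat -> R) (l : nat -> R) K :
  (forall k, (fun n => f n k) @ \oo --> l k) ->
  (fun n => \sum_(0 <= k < K) f n k) @ \oo --> \sum_(0 <= k < K) l k.
Proof.
move=> h; elim: K => [|K IH].
  rewrite big_geq //; under eq_fun do rewrite big_geq //; exact: cvg_cst.
rewrite big_nat_recr //=; under eq_fun do rewrite big_nat_recr //=.
exact: cvgD.
Qed.

Lemma ell2_bound (R : realType) (c : nat -> R) (X : R) :
  (forall N, \sum_(0 <= k < N) (c k) ^+ 2 <= X) ->
  ell2 c /\ fine (\sum_(k <oo) ((c k) ^+ 2)%:E)%E <= X.
Proof.
move=> h.
have le : (\sum_(k <oo) ((c k) ^+ 2)%:E <= X%:E)%E.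
  apply: lime_le; first by apply: is_cvg_ereal_nneg_natsum => n _; rewrite lee_fin sqr_ge0.
  by near=> n; rewrite sumEFin lee_fin h.
have ge : (0 <= \sum_(k <oo) ((c k) ^+ 2)%:E)%E.
  by apply: nneseries_ge0 => n _; rewrite lee_fin sqr_ge0.
split; first by rewrite /ell2 /=; apply: le_lt_trans le _; exact: ltry.
have fin : (\sum_(k <oo) ((c k) ^+ 2)%:E)%E \is a fin_num.
  by rewrite ge0_fin_numE //; apply: le_lt_trans le _; exact: ltry.
by move: le; rewrite -(fineK fin) lee_fin.
Unshelve. all: by end_near. Qed.

Lemma ell2_partial (R : realType) (c : nat -> R) : ell2 c ->
  forall N, \sum_(0 <= k < N) (c k) ^+ 2 <= fine (\sum_(k <oo) ((c k) ^+ 2)%:E)%E.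
Proof.
move=> hc N.
have fin : (\sum_(k <oo) ((c k) ^+ 2)%:E)%E \is a fin_num.
  by rewrite ge0_fin_numE; [exact: hc | apply: nneseries_ge0 => n _; rewrite lee_fin sqr_ge0].
have h := @nneseries_lim_ge R (fun k => ((c k)^+2)%:E) xpredT 0 N
  (fun n _ _ => sqr_ge0 (c n)).
by move: h; rewrite sumEFin -(fineK fin) lee_fin.
Qed.

Lemma ell2norm_le (R : realType) (c : nat -> R) (B : R) : ell2 c -> ell2norm c <= B ->
  forall N, \sum_(0 <= k < N) (c k) ^+ 2 <= B ^+ 2.
Proof.
move=> hc hB N; apply: le_trans (ell2_partial hc N) _.
have B0 : 0 <= B by apply: le_trans hB; exact: sqrtr_ge0.
have f0 : 0 <= fine (\sum_(k <oo) ((c k) ^+ 2)%:E)%E.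
  by apply: fine_ge0; apply: nneseries_ge0 => n _; rewrite lee_fin sqr_ge0.
by rewrite -(sqr_sqrtr f0) lerXn2r // ?nnegrE ?sqrtr_ge0.
Qed.

Lemma sqrt_cvg0 (R : realType) (q : nat -> R) :
  (forall e, 0 < e -> \forall n \near \oo, q n <= e) ->
  (fun n => Num.sqrt (q n)) @ \oo --> (0 : R).
Proof.
move=> h; apply/cvgrPdist_le => e e0.
have e20 : 0 < e ^+ 2 by rewrite exprn_gt0.
near=> n; rewrite sub0r normrN ger0_norm ?sqrtr_ge0 //.
have : q n <= e ^+ 2 by near: n; exact: h.
move=> qe; rewrite -(ger0_norm (ltW e0)) -sqrtr_sqr ler_sqrt //; exact: ltW.
Unshelve. all: by end_near. Qed.

Lemma sq_le_abs (R : realFieldType) (x D : R) : x ^+ 2 <= D -> `|x| <= 1 + D.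
Proof.
move=> h; have u0 : 0 <= `|x| by [].
have : `|x| ^+ 2 <= D by rewrite real_normK ?num_real.
move: u0; generalize `|x| => u; nra.
Qed.

Lemma le_of_cvg (R : realType) (u : nat -> R) (l b : R) :
  u @ \oo --> l -> (forall n, u n <= b) -> l <= b.
Proof.
move=> hu hb; rewrite -(cvg_lim _ hu) //; apply: limr_le; first exact: cvgP hu.
exact: nearW.
Qed.

Lemma ell2_extract (R : realType) (a : nat -> nat -> R) (t : nat -> R) (S C : R) :
  (forall k, 0 <= t k) -> (forall N, \sum_(0 <= k < N) t k <= S) -> 0 <= C ->
  (forall n k, (a n k) ^+ 2 <= C * t k) ->
  exists phi : nat -> nat, (forall n, (phi n < phi n.+1)%N) /\
    exists y : nat -> R, ell2 y /\
      (fun n => ell2norm (fun k => a (phi n) k - y k)) @ \oo --> (0 : R).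
Proof.
move=> t0 tS C0 hat.
have [phi [phi_inc cv]] := @diag_extract R a (fun k => 1 + C * t k)
  (fun n k => sq_le_abs (hat n k)).
exists phi; split => //.
pose y k := limn (fun n => a (phi n) k).
have hy : forall k, (fun n => a (phi n) k) @ \oo --> y k by move=> k; exact: cv.
have yt : forall k, (y k) ^+ 2 <= C * t k.
  move=> k; apply: (@le_of_cvg _ (fun n => a (phi n) k ^+ 2)) => //.
  by under eq_fun do rewrite expr2; rewrite expr2; apply: cvgM; exact: hy.
have dt : forall n k, (a (phi n) k - y k) ^+ 2 <= 4 * C * t k.
  move=> n k; have h1 := hat (phi n) k; have h2 := yt k.
  have : (a (phi n) k - y k) ^+ 2 <= 2 * (a (phi n) k) ^+ 2 + 2 * (y k) ^+ 2.
    move=> {h1 h2}; generalize (a (phi n) k) (y k) => p q; rewrite -subr_ge0.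
    have -> : 2 * p ^+ 2 + 2 * q ^+ 2 - (p - q) ^+ 2 = (p + q) ^+ 2 by ring.
    exact: sqr_ge0.
  move=> h3; apply: le_trans h3 _; lra.
exists y; split.
  have h : forall N, \sum_(0 <= k < N) (y k) ^+ 2 <= C * S.
    move=> N; apply: le_trans (_ : \sum_(0 <= k < N) C * t k <= _).
      by apply: ler_sum => k _; exact: yt.
    by rewrite -mulr_sumr; apply: ler_wpM2l.
  exact: (ell2_bound h).1.
apply: sqrt_cvg0 => e e0.
pose eta := e / (8 * (C + 1)).
have eta0 : 0 < eta by rewrite /eta divr_gt0 // mulr_gt0 // ltr_wpDl.
have [K HK] := tail_small t0 tS eta0.
have fin0 : (fun n => \sum_(0 <= k < K) (a (phi n) k - y k) ^+ 2) @ \oo --> \sum_(0 <= k < K) (0:R).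
  apply: cvg_finsum => k.
  have h : (fun n => a (phi n) k - y k) @ \oo --> (0:R).
    by rewrite -(subrr (y k)); apply: cvgB => //; exact: cvg_cst.
  by rewrite -(mul0r 0) ; under eq_fun do rewrite expr2; apply: cvgM.
rewrite big1 // in fin0.
have e20 : 0 < e / 2 by rewrite divr_gt0.
have [n0 _ Hn0] := proj1 (cvgrPdist_le _ _) fin0 _ e20.
exists n0 => // n /Hn0 /= hn.
have hfin : \sum_(0 <= k < K) (a (phi n) k - y k) ^+ 2 <= e / 2.
  by move: hn; rewrite sub0r normrN => /(le_trans (ler_norm _)).
have hb : forall N, \sum_(0 <= k < N) (a (phi n) k - y k) ^+ 2 <= e.
  move=> N.
  apply: (@le_trans _ _ (\sum_(0 <= k < maxn N K) (a (phi n) k - y k) ^+ 2)).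
    rewrite (big_cat_nat (leq0n N) (leq_maxl N K)) /= lerDl.
    by apply: sumr_ge0 => k _; exact: sqr_ge0.
  rewrite (big_cat_nat (leq0n K) (leq_maxr N K)) /=.
  have ht : \sum_(K <= k < maxn N K) (a (phi n) k - y k) ^+ 2 <= 4 * C * eta.
    apply: le_trans (_ : \sum_(K <= k < maxn N K) 4 * C * t k <= _).
      by apply: ler_sum => k _; exact: dt.
    rewrite -mulr_sumr; apply: ler_wpM2l; [nra | exact: HK].
  have : 4 * C * eta <= e / 2.
    have C1 : 0 < C + 1 by rewrite ltr_wpDl.
    have -> : 4 * C * eta = e / 2 * (C / (C + 1)).
      by rewrite /eta; field; rewrite lt0r_neq0.
    apply: ler_piMr; first exact: ltW.
    by rewrite ler_pdivrMr // mul1r lerDl.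
  lra.
by have := (ell2_bound hb).2.
Qed.

Section meas.
Context (d : measure_display) (T : measurableType d) (R : realType)
  (mu : {measure set T -> \bar R}).

Definition Int (f : T -> R) := mu.-integrable setT (EFin \o f).

Lemma Int_meas f : Int f -> measurable_fun setT f.
Proof. by move=> /integrableP[/measurable_EFinP]. Qed.

Lemma dom_int (g h : T -> R) : measurable_fun setT g -> Int h ->
  (forall x, `|g x| <= h x) -> Int g.
Proof.
move=> mg ih hgh; apply: le_integrable ih => //; first exact/measurable_EFinP.
move=> x _ /=; rewrite lee_fin (le_trans (hgh x)) //; exact: ler_norm.
Qed.

Lemma ge0_int (g : T -> R) : measurable_fun setT g -> (forall x, 0 <= g x) ->
  (\int[mu]_x (g x)%:E < +oo)%E -> Int g.
Proof.
move=> mg g0 fin; apply/integrableP; split; first exact/measurable_EFinP.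
under eq_integral do rewrite /= ger0_norm ?g0 //.
exact: fin.
Qed.

Lemma Int_fin (g : T -> R) : Int g ->
  (\int[mu]_x (g x)%:E)%E = (Rintegral mu setT g)%:E.
Proof. by move=> ig; rewrite /Rintegral fineK //; exact: integrable_fin_num ig. Qed.

Lemma L2_int f : L2 mu f -> Int (fun x => f x ^+ 2).
Proof.
move=> [mf fin]; apply: ge0_int => //; first exact: measurable_funX.
by move=> x; exact: sqr_ge0.
Qed.

Lemma sqL2E f : L2 mu f -> sqL2 mu f = (Rintegral mu setT (fun x => f x ^+ 2))%:E.
Proof. by move=> hf; rewrite /sqL2 -Int_fin //; exact: L2_int. Qed.

Lemma L2normE f : L2 mu f -> L2norm mu f = Num.sqrt (Rintegral mu setT (fun x => f x ^+ 2)).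
Proof. by move=> hf; rewrite /L2norm sqL2E. Qed.

Lemma prod_int f g : L2 mu f -> L2 mu g -> Int (fun x => f x * g x).
Proof.
move=> hf hg.
have ifg : Int (fun x => f x ^+ 2 + g x ^+ 2).
  apply: (eq_integrable _ _ _ _ (integrableD _ (L2_int hf) (L2_int hg))) => //.
apply: (dom_int _ ifg) => //; first by apply: measurable_funM; [case: hf | case: hg].
move=> x; rewrite normrM.
have : 0 <= (`|f x| - `|g x|) ^+ 2 by exact: sqr_ge0.
rewrite -(real_normK (num_real (f x))) -(real_normK (num_real (g x))).
generalize `|f x| `|g x| => p q; nra.
Qed.

Lemma indic_int (E : set T) (c : R) : measurable E -> (mu E < +oo)%E ->
  Int (fun x => c * \1_E x) /\ Rintegral mu setT (fun x => c * \1_E x) = c * fine (mu E).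
Proof.
move=> mE fE.
have mi : measurable_fun setT (fun x => c * \1_E x).
  by apply: measurable_funM => //; exact: measurable_indic.
have ie : (\int[mu]_x (\1_E x)%:E = mu E)%E by rewrite integral_indic // setIT.
have i1 : Int (fun x => \1_E x).
  apply: ge0_int; [exact: measurable_indic | by move=> x; rewrite indicE | by rewrite ie].
have ic : Int (fun x => c * \1_E x).
  by apply: (eq_integrable _ _ _ _ (integrableZl _ c i1)) => // x _ /=; rewrite EFinM.
split => //.
rewrite RintegralZl //; congr (_ * _).
by rewrite /Rintegral ie.
Qed.

Lemma dom_L2 (E : set T) (g : T -> R) (c : R) : measurable E -> (mu E < +oo)%E ->
  measurable_fun setT g -> (forall x, g x ^+ 2 <= c * \1_E x) ->
  L2 mu g /\ Rintegral mu setT (fun x => g x ^+ 2) <= c * fine (mu E).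
Proof.
move=> mE fE mg hg.
have [ic rc] := indic_int c mE fE.
have ig : Int (fun x => g x ^+ 2).
  apply: (dom_int _ ic); first exact: measurable_funX.
  by move=> x; rewrite ger0_norm ?sqr_ge0 //; exact: hg.
split.
  split => //; rewrite /sqL2 Int_fin //; exact: ltry.
by rewrite -rc; apply: le_Rintegral => // x _; exact: hg.
Qed.

End meas.

Section meas2.
Context (d : measure_display) (T : measurableType d) (R : realType)
  (mu : {measure set T -> \bar R}).
Local Notation Int := (@Int d T R mu).
Local Notation Rint := (Rintegral mu setT).

Lemma IntZD (a : R) (f g : T -> R) : Int f -> Int g ->
  Int (fun x => a * f x + g x) /\ Rint (fun x => a * f x + g x) = a * Rint f + Rint g.
Proof.
move=> If Ig.
have Iaf : Int (fun x => a * f x).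
  by apply: (eq_integrable _ _ _ _ (integrableZl _ a If)) => // x _ /=; rewrite EFinM.
have I2 : Int (fun x => a * f x + g x).
  by apply: (eq_integrable _ _ _ _ (integrableD _ Iaf Ig)).
split => //; rewrite RintegralD //; congr (_ + _); exact: RintegralZl.
Qed.

Lemma Rint_sum (F : nat -> T -> R) N : (forall k, Int (F k)) ->
  Int (fun x => \sum_(0 <= k < N) F k x) /\
  Rint (fun x => \sum_(0 <= k < N) F k x) = \sum_(0 <= k < N) Rint (F k).
Proof.
move=> IF; elim: N => [|N [IH1 IH2]].
  under eq_fun do rewrite big_geq //; rewrite big_geq //.
  split; last by rewrite /Rintegral integral0.
  have [i _] := IntZD (-1) (IF 0%N) (IF 0%N).
  by apply: (eq_integrable _ _ _ _ i) => // x _ /=; rewrite mulN1r addNr.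
under eq_fun do rewrite big_nat_recr //=; rewrite big_nat_recr //=.
have [i r] := @IntZD 1 _ _ IH1 (IF N).
split.
  by apply: (eq_integrable _ _ _ _ i) => // x _ /=; rewrite mul1r.
rewrite -IH2 -[X in X + _]mul1r -r; apply: eq_Rintegral => x _; by rewrite mul1r.
Qed.

Lemma CS_int (f g : T -> R) : L2 mu f -> L2 mu g ->
  (Rint (fun x => f x * g x)) ^+ 2 <=
  Rint (fun x => f x ^+ 2) * Rint (fun x => g x ^+ 2).
Proof.
move=> hf hg; apply: disc_le.
  by apply: Rintegral_ge0 => x _; exact: sqr_ge0.
move=> l.
have If := L2_int hf; have Ig := L2_int hg; have Ifg := prod_int hf hg.
have [I1 r1] := IntZD (-2 * l) Ifg If.
have [I2 r2] := IntZD (l ^+ 2) Ig I1.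
have -> : Rint (fun x => f x ^+ 2) - 2 * l * Rint (fun x => f x * g x) +
   l ^+ 2 * Rint (fun x => g x ^+ 2) =
   Rint (fun x => l ^+ 2 * g x ^+ 2 + (-2 * l * (f x * g x) + f x ^+ 2)).
  by rewrite r2 r1; ring.
apply: Rintegral_ge0 => x _.
have -> : l ^+ 2 * g x ^+ 2 + (-2 * l * (f x * g x) + f x ^+ 2) = (f x - l * g x) ^+ 2 by ring.
exact: sqr_ge0.
Qed.

End meas2.

Lemma two_pq (R : realFieldType) (p q : R) : 2 * (p * q) <= p ^+ 2 + q ^+ 2.
Proof. have := sqr_ge0 (p - q); nra. Qed.

Lemma two_ab (R : realType) (a b : R) : 2 * (`|a| * `|b|) <= a ^+ 2 + b ^+ 2.
Proof. by have := two_pq (`|a|) (`|b|); rewrite !real_normK ?num_real. Qed.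

Lemma shift_sum (R : realType) (F : nat -> R) K N :
  \sum_(K <= k < N) F k = \sum_(0 <= k < N - K) F (k + K)%N.
Proof. by rewrite -{1}(add0n K) big_addn. Qed.

Lemma sub_sum (R : realType) (F : nat -> R) m N : (forall k, 0 <= F k) ->
  \sum_(m <= k < N) F k <= \sum_(0 <= k < N) F k.
Proof.
move=> F0; have [mN|Nm] := leqP m N; last first.
  by rewrite big_geq ?(ltnW Nm) //; apply: sumr_ge0 => k _.
by rewrite (big_cat_nat (leq0n m) mN) /= lerDr; apply: sumr_ge0 => k _.
Qed.

Lemma third_le (R : realType) (Q Cm e c : R) : 0 <= Q -> 0 <= Cm -> 0 < e -> 0 < c ->
  Q <= e / (c * (Cm + 1)) -> Q * Cm <= e / c.
Proof.
move=> Q0 C0 e0 c0 hQ.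
have C1 : 0 < Cm + 1 by rewrite ltr_wpDl.
apply: le_trans (_ : e / (c * (Cm + 1)) * Cm <= _); first exact: ler_wpM2r.
have -> : e / (c * (Cm + 1)) * Cm = e / c * (Cm / (Cm + 1)).
  by field; rewrite !lt0r_neq0.
apply: ler_piMr; first by rewrite divr_ge0 // ltW.
by rewrite ler_pdivrMr // mul1r lerDl.
Qed.

Section main.
Context (d : measure_display) (T : measurableType d) (R : realType)
  (mu : {measure set T -> \bar R}) (E : set T)
  (mE : measurable E) (E_fin : (mu E < +oo)%E)
  (v : nat -> T -> R) (v_L2 : forall k, L2 mu (v k)) (M : R)
  (v_bnd : forall x, E x -> (\sum_(k <oo) ((v k x) ^+ 2)%:E <= (M ^+ 2)%:E)%E).
Local Notation Rint := (Rintegral mu setT).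
Local Notation Int := (@Int d T R mu).

Definition w k x : R := (\1_E x : R) * v k x.
Definition t k := Rint (fun x => w k x ^+ 2).

Lemma mv k : measurable_fun setT (v k). Proof. by case: (v_L2 k). Qed.

Lemma M2_ge0 : 0 <= M ^+ 2. Proof. exact: sqr_ge0. Qed.

Lemma vsum_le x N : E x -> \sum_(0 <= k < N) (v k x) ^+ 2 <= M ^+ 2.
Proof.
move=> Ex.
have h := @nneseries_lim_ge R (fun k => ((v k x) ^+ 2)%:E) xpredT 0 N
  (fun n _ _ => sqr_ge0 (v n x)).
by rewrite -lee_fin -sumEFin (le_trans h) //; exact: v_bnd.
Qed.

Lemma vsum_le' x m N : E x -> \sum_(m <= k < N) (v k x) ^+ 2 <= M ^+ 2.
Proof.
move=> Ex; have [mN|Nm] := leqP m N; last by rewrite big_geq ?M2_ge0 // ltnW.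
apply: le_trans (vsum_le N Ex).
rewrite (big_cat_nat (leq0n m) mN) /= lerDr.
by apply: sumr_ge0 => k _; exact: sqr_ge0.
Qed.

Lemma indic01 x : (\1_E x = 1 :> R /\ E x) \/ (\1_E x = 0 :> R /\ ~ E x).
Proof.
rewrite indicE; case: (boolP (x \in E)) => h.
  by left; split => //; exact: set_mem.
by right; split => //; move=> Ex; move/negP: h; apply; exact: mem_set.
Qed.

Lemma w_meas k : measurable_fun setT (w k).
Proof. by apply: measurable_funM; [exact: measurable_indic | exact: mv]. Qed.

Lemma w_sq k x : w k x ^+ 2 <= M ^+ 2 * \1_E x.
Proof.
rewrite /w; case: (indic01 x) => -[-> Ex]; last by rewrite !mul0r expr0n mulr0.
rewrite mul1r mulr1; have := vsum_le' k k.+1 Ex.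
by rewrite big_nat1.
Qed.

Lemma w_L2 k : L2 mu (w k).
Proof. exact: (dom_L2 mE E_fin (w_meas k) (w_sq k)).1. Qed.

Lemma t_ge0 k : 0 <= t k.
Proof. by apply: Rintegral_ge0 => x _; exact: sqr_ge0. Qed.

Lemma t_sum N : \sum_(0 <= k < N) t k <= M ^+ 2 * fine (mu E).
Proof.
have [I r] := @Rint_sum d T R mu (fun k x => w k x ^+ 2) N (fun k => L2_int (w_L2 k)).
rewrite /t -r.
have [Ic rc] := @indic_int d T R mu E (M ^+ 2) mE E_fin.
rewrite -rc; apply: le_Rintegral => // x _.
case: (indic01 x) => -[h1 Ex]; rewrite h1.
  rewrite mulr1; under eq_bigr do rewrite /w h1 mul1r.
  exact: vsum_le.
by rewrite mulr0 big1 // => k _; rewrite /w h1 mul0r expr0n.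
Qed.

Lemma Vop_w f : L2on mu E f -> forall k, Vop mu v f k = Rint (fun x => f x * w k x).
Proof.
move=> [_ f0] k; rewrite /Vop /L2inner.
change (Rint (fun x => f x * v k x) = Rint (fun x => f x * w k x)).
apply: eq_Rintegral => x _; rewrite /w.
by case: (indic01 x) => -[-> Ex]; [rewrite mul1r | rewrite f0 // !mul0r].
Qed.

Lemma Vop_sq f k : L2on mu E f -> (Vop mu v f k) ^+ 2 <= Rint (fun x => f x ^+ 2) * t k.
Proof. by move=> hf; rewrite Vop_w //; apply: CS_int; [case: hf | exact: w_L2]. Qed.

Lemma Rint_le_B f B : L2 mu f -> L2norm mu f <= B -> Rint (fun x => f x ^+ 2) <= B ^+ 2.
Proof.
move=> hf; rewrite L2normE // => hB.
have B0 : 0 <= B by apply: le_trans hB; exact: sqrtr_ge0.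
have f0 : 0 <= Rint (fun x => f x ^+ 2) by apply: Rintegral_ge0 => x _; exact: sqr_ge0.
by rewrite -(sqr_sqrtr f0) lerXn2r // ?nnegrE ?sqrtr_ge0.
Qed.

Lemma L2_lin a f g : L2 mu f -> L2 mu g -> L2 mu (fun x => a * f x + g x).
Proof.
move=> hf hg.
have mfg : measurable_fun setT (fun x => a * f x + g x).
  apply: measurable_funD; last by case: hg.
  by apply: measurable_funM; [exact: measurable_cst | case: hf].
split => //.
have [I1 _] := IntZD (2 * a ^+ 2) (L2_int hf) (L2_int hg).
have [I2 _] := IntZD 1 I1 (L2_int hg).
have I3 : Int (fun x => (a * f x + g x) ^+ 2).
  apply: (dom_int _ I2); first exact: measurable_funX.
  move=> x; rewrite ger0_norm ?sqr_ge0 // mul1r.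
  have := sqr_ge0 (a * f x - g x).
  move=> h; rewrite -subr_ge0; apply: le_trans h _; rewrite le_eqVlt; apply/orP; left.
  by apply/eqP; ring.
by rewrite /sqL2 Int_fin //; exact: ltry.
Qed.

Lemma part1 : compact_operator (L2on mu E) (L2norm mu) ell2 ell2norm (Vop mu v).
Proof.
split.
- move=> f hf.
  have h : forall N, \sum_(0 <= k < N) (Vop mu v f k) ^+ 2 <=
      Rint (fun x => f x ^+ 2) * (M ^+ 2 * fine (mu E)).
    move=> N; apply: le_trans (_ : \sum_(0 <= k < N) Rint (fun x => f x ^+ 2) * t k <= _).
      by apply: ler_sum => k _; exact: Vop_sq.
    rewrite -mulr_sumr; apply: ler_wpM2l; last exact: t_sum.
    by apply: Rintegral_ge0 => x _; exact: sqr_ge0.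
  exact: (ell2_bound h).1.
- move=> a f g hf hg; apply/funext => k /=.
  have e1 : a *: f + g = (fun x => a * f x + g x) by [].
  have e2 : (a *: Vop mu v f + Vop mu v g) k = a * Vop mu v f k + Vop mu v g k by [].
  rewrite e1 e2 !Vop_w //; last first.
    split; first by apply: L2_lin; [case: hf | case: hg].
    by move=> x Ex; rewrite hf.2 // hg.2 // mulr0 addr0.
  have [_ r] := IntZD a (prod_int hf.1 (w_L2 k)) (prod_int hg.1 (w_L2 k)).
  rewrite -r; apply: eq_Rintegral => x _; ring.
- move=> u hu [B hB].
  have hB2 : forall n k, (Vop mu v (u n) k) ^+ 2 <= B ^+ 2 * t k.
    move=> n k; apply: le_trans (Vop_sq k (hu n)) _.
    by apply: ler_wpM2r; [exact: t_ge0 | exact: Rint_le_B (hu n).1 (hB n)].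
  have [phi [phi_inc [y [hy cv]]]] :=
    @ell2_extract R (fun n k => Vop mu v (u n) k) t _ _ t_ge0 t_sum (sqr_ge0 B) hB2.
  exists phi, y; split => //; first exact: strict_homo.
Qed.


Lemma le_of_cvg_near (u : nat -> R) (l b : R) (N : nat) :
  u @ \oo --> l -> (forall n, (N <= n)%N -> u n <= b) -> l <= b.
Proof.
move=> hu hb; rewrite -(cvg_lim _ hu) //; apply: limr_le; first exact: cvgP hu.
by exists N.
Qed.

Definition P (c : nat -> R) N x := \sum_(k < N) c k * v k x.

Lemma PE c N x : P c N x = \sum_(0 <= k < N) c k * v k x.
Proof. by rewrite /P big_mkord. Qed.

Lemma VpE c N x : Vpartial E v c N x = \1_E x * P c N x.
Proof. by []. Qed.

Lemma VsE c x : Vstar E v c x = \1_E x * limn (fun N => P c N x).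
Proof. by []. Qed.

Lemma P_cvg c x : ell2 c -> E x -> cvgn (fun N => P c N x).
Proof.
move=> hc Ex.
have -> : (fun N => P c N x) = series (fun k => c k * v k x).
  by apply/funext => N; rewrite PE.
apply: normed_cvg.
apply: nondecreasing_is_cvgn.
  by apply/nondecreasing_seqP => n; rewrite /normed_series_of /series /= big_nat_recr //= lerDl.
exists ((fine (\sum_(k <oo) ((c k) ^+ 2)%:E)%E + M ^+ 2) / 2) => _ [n _ <-] /=.
rewrite ler_pdivlMr // mulrC mulr_sumr.
apply: le_trans (_ : \sum_(0 <= k < n) ((c k) ^+ 2 + (v k x) ^+ 2) <= _).
  by apply: ler_sum => k _; rewrite normrM; exact: two_ab.
rewrite big_split /=; apply: lerD; first exact: ell2_partial.
exact: vsum_le.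
Qed.

Lemma P_sq c x m N : E x ->
  (\sum_(m <= k < N) c k * v k x) ^+ 2 <= (\sum_(m <= k < N) (c k) ^+ 2) * M ^+ 2.
Proof.
move=> Ex; apply: le_trans (cs_sum _ _ _ _) _.
apply: ler_wpM2l; last exact: vsum_le'.
by apply: sumr_ge0 => k _; exact: sqr_ge0.
Qed.

Lemma Vstar_lim c x : ell2 c -> (fun N => Vpartial E v c N x) @ \oo --> Vstar E v c x.
Proof.
move=> hc; rewrite VsE; case: (indic01 x) => -[h Ex]; rewrite h.
  under eq_fun do rewrite VpE h mul1r.
  by rewrite mul1r; exact: (P_cvg hc Ex).
under eq_fun do rewrite VpE h mul0r.
by rewrite mul0r; exact: cvg_cst.
Qed.

Lemma Vp_meas c N : measurable_fun setT (Vpartial E v c N).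
Proof.
apply: measurable_funM; first exact: measurable_indic.
apply: measurable_sum => k.
by apply: measurable_funM; [exact: measurable_cst | exact: mv].
Qed.

Lemma Vs_meas c : ell2 c -> measurable_fun setT (Vstar E v c).
Proof.
move=> hc; apply: (measurable_fun_cvg (h := fun N => Vpartial E v c N)).
  by move=> m; exact: Vp_meas.
by move=> x _; exact: Vstar_lim.
Qed.

Lemma tail_pt c e : ell2 c -> 0 < e -> exists K, forall N, (K <= N)%N ->
  forall x, (Vpartial E v c N x - Vstar E v c x) ^+ 2 <= e * M ^+ 2 * \1_E x.
Proof.
move=> hc e0.
have [K HK] := tail_small (fun k => sqr_ge0 (c k)) (ell2_partial hc) e0.
exists K => N KN x; rewrite VpE VsE.
case: (indic01 x) => -[h Ex]; rewrite h; last by rewrite !mul0r subrr expr0n mulr0.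
rewrite !mul1r mulr1.
have hl : (fun N' => (P c N' x - P c N x) ^+ 2) @ \oo --> (limn (fun N' => P c N' x) - P c N x) ^+ 2.
  rewrite expr2; under eq_fun do rewrite expr2.
  by apply: cvgM; apply: cvgB; [exact: (P_cvg hc Ex) | exact: cvg_cst | exact: (P_cvg hc Ex) | exact: cvg_cst].
rewrite -sqrrN opprB.
apply: (le_of_cvg_near (N := N) hl) => N' NN'.
rewrite !PE (big_cat_nat (leq0n N) NN') /= addrAC subrr add0r.
apply: le_trans (P_sq _ _ _ Ex) _.
apply: ler_wpM2r; first exact: M2_ge0.
apply: le_trans (HK N').
rewrite (big_cat_nat KN NN') /= lerDr.
by apply: sumr_ge0 => k _; exact: sqr_ge0.
Qed.

Lemma part2 c : ell2 c ->
  (fun n => L2norm mu (Vpartial E v c n - Vstar E v c)) @ \oo --> (0 : R).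
Proof.
move=> hc; apply: sqrt_cvg0 => e e0.
set C := M ^+ 2 * fine (mu E).
have C0 : 0 <= C by rewrite mulr_ge0 ?M2_ge0 // fine_ge0.
have eta0 : 0 < e / (C + 1) by rewrite divr_gt0 // ltr_wpDl.
have [K HK] := tail_pt hc eta0.
exists K => // N /= KN.
have mh : measurable_fun setT (Vpartial E v c N - Vstar E v c).
  by apply: measurable_funB; [exact: Vp_meas | exact: Vs_meas].
have [hL hR] := dom_L2 mE E_fin mh (fun x => le_trans (HK N KN x) (le_refl _)).
rewrite sqL2E //=.
apply: le_trans hR _.
have -> : e / (C + 1) * M ^+ 2 * fine (mu E) = e * (C / (C + 1)) by rewrite /C; field; rewrite lt0r_neq0 // ltr_wpDl.
apply: ler_piMr; first exact: ltW.
by rewrite ler_pdivrMr ?ltr_wpDl // mul1r lerDl.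
Qed.


Definition S2 (c : nat -> R) := fine (\sum_(k <oo) ((c k) ^+ 2)%:E)%E.

Lemma S2_ge0 c : 0 <= S2 c.
Proof. by apply: fine_ge0; apply: nneseries_ge0 => n _; rewrite lee_fin sqr_ge0. Qed.

Lemma Vstar_sq c x : ell2 c -> (Vstar E v c x) ^+ 2 <= S2 c * M ^+ 2 * \1_E x.
Proof.
move=> hc; rewrite VsE; case: (indic01 x) => -[h Ex]; rewrite h; last by rewrite !mul0r expr0n mulr0.
rewrite mul1r mulr1.
have hl : (fun N => (P c N x) ^+ 2) @ \oo --> (limn (fun N => P c N x)) ^+ 2.
  rewrite expr2; under eq_fun do rewrite expr2.
  by apply: cvgM; exact: (P_cvg hc Ex).
apply: (le_of_cvg hl) => N; rewrite PE.
apply: le_trans (P_sq _ _ _ Ex) _.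
apply: ler_wpM2r; first exact: M2_ge0.
exact: ell2_partial.
Qed.

Lemma Vstar_L2on c : ell2 c -> L2on mu E (Vstar E v c).
Proof.
move=> hc; split.
  exact: (dom_L2 mE E_fin (Vs_meas hc) (fun x => Vstar_sq x hc)).1.
move=> x Ex; rewrite VsE; case: (indic01 x) => -[h Ex']; first by [].
by rewrite h mul0r.
Qed.

Lemma Vstar_lin a c c' x : ell2 c -> ell2 c' ->
  Vstar E v (fun k => a * c k + c' k) x = a * Vstar E v c x + Vstar E v c' x.
Proof.
move=> hc hc'; rewrite !VsE; case: (indic01 x) => -[h Ex]; rewrite h; last by rewrite !mul0r mulr0 addr0.
rewrite !mul1r.
have e : (fun N => P (fun k => a * c k + c' k) N x) = (fun N => a * P c N x + P c' N x).
  apply/funext => N; rewrite !PE mulr_sumr -big_split /=.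
  by apply: eq_bigr => k _; ring.
rewrite e; apply: cvg_lim => //.
apply: cvgD; last exact: (P_cvg hc' Ex).
by apply: cvgM; [exact: cvg_cst | exact: (P_cvg hc Ex)].
Qed.


Lemma key_bound D X K eta delta :
  (forall N, \sum_(0 <= k < N) (D k) ^+ 2 <= X) ->
  (forall N, \sum_(K <= k < N) t k <= eta) -> 0 < delta ->
  Rint (fun x => (Vstar E v D x) ^+ 2) <=
    4 * (\sum_(0 <= k < K) (D k) ^+ 2) * (M ^+ 2 * fine (mu E)) + 4 * X * eta
    + 2 * delta * (M ^+ 2 * fine (mu E)).
Proof.
move=> hD heta d0.
have hD' := (ell2_bound hD).1.
have X0 : 0 <= X by apply: le_trans (hD 0%N); rewrite big_geq.
have [N0 HN0] := tail_pt hD' d0.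
set N := maxn N0 K.
have HN := HN0 N (leq_maxl _ _).
set Q := \sum_(0 <= k < K) (D k) ^+ 2.
have Q0 : 0 <= Q by apply: sumr_ge0 => k _; exact: sqr_ge0.
pose G x := 4 * X * \sum_(0 <= k < N - K) w (k + K) x ^+ 2 +
  (4 * Q * M ^+ 2 + 2 * delta * M ^+ 2) * \1_E x.
have [Is rs] := @Rint_sum d T R mu (fun k x => w (k + K) x ^+ 2) (N - K)
  (fun k => L2_int (w_L2 (k + K))).
have [Ic rc] := @indic_int d T R mu E (4 * Q * M ^+ 2 + 2 * delta * M ^+ 2) mE E_fin.
have [IG rG] := IntZD (4 * X) Is Ic.
have hpt : forall x, (Vstar E v D x) ^+ 2 <= G x.
  move=> x; have h1 := HN x.
  have h0 : (Vstar E v D x) ^+ 2 <= 2 * (Vpartial E v D N x) ^+ 2 +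
      2 * (Vpartial E v D N x - Vstar E v D x) ^+ 2.
    rewrite -subr_ge0.
    have -> : 2 * (Vpartial E v D N x) ^+ 2 + 2 * (Vpartial E v D N x - Vstar E v D x) ^+ 2
      - (Vstar E v D x) ^+ 2 = (2 * Vpartial E v D N x - Vstar E v D x) ^+ 2 by ring.
    exact: sqr_ge0.
  have h2 : (Vpartial E v D N x) ^+ 2 <= 2 * Q * M ^+ 2 * \1_E x +
      2 * X * \sum_(0 <= k < N - K) w (k + K) x ^+ 2.
    rewrite VpE; case: (indic01 x) => -[h Ex]; rewrite h; last first.
      rewrite !mul0r expr0n mulr0 add0r big1 ?mulr0 // => k _.
      by rewrite /w h mul0r expr0n.
    rewrite mul1r mulr1.
    under eq_bigr do rewrite /w h mul1r.
    rewrite -(shift_sum (fun k => v k x ^+ 2)) PE (big_cat_nat (leq0n K) (leq_maxr N0 K)) /=.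
    set a := \sum_(0 <= k < K) _; set b := \sum_(K <= k < N) _.
    have ha : a ^+ 2 <= Q * M ^+ 2 by exact: P_sq.
    have hb : b ^+ 2 <= X * \sum_(K <= k < N) v k x ^+ 2.
      apply: le_trans (cs_sum _ _ _ _) _.
      apply: ler_wpM2r; first by apply: sumr_ge0 => k _; exact: sqr_ge0.
      apply: le_trans (hD N); apply: sub_sum => k; exact: sqr_ge0.
    have hab : (a + b) ^+ 2 <= 2 * a ^+ 2 + 2 * b ^+ 2.
      rewrite -subr_ge0.
      have -> : 2 * a ^+ 2 + 2 * b ^+ 2 - (a + b) ^+ 2 = (a - b) ^+ 2 by ring.
      exact: sqr_ge0.
    apply: le_trans hab _; rewrite -!mulrA; apply: lerD; apply: ler_wpM2l => //.
  apply: le_trans h0 _.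
  have -> : G x = 2 * (2 * Q * M ^+ 2 * \1_E x + 2 * X * \sum_(0 <= k < N - K) w (k + K) x ^+ 2)
     + 2 * (delta * M ^+ 2 * \1_E x) by rewrite /G; ring.
  by apply: lerD; apply: ler_wpM2l.
apply: (@le_trans _ _ (Rint G)).
  apply: le_Rintegral; [by [] | exact: L2_int (Vstar_L2on hD').1 | exact: IG |].
  by move=> x _; exact: hpt.
have -> : Rint G = 4 * X * \sum_(0 <= k < N - K) t (k + K) +
     (4 * Q * M ^+ 2 + 2 * delta * M ^+ 2) * fine (mu E).
  rewrite /G -rs -rc -rG; apply: eq_Rintegral => x _; ring.
have ht : \sum_(0 <= k < N - K) t (k + K) <= eta by rewrite -shift_sum; exact: heta.
have : 4 * X * \sum_(0 <= k < N - K) t (k + K) <= 4 * X * eta.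
  by apply: ler_wpM2l => //; rewrite mulr_ge0.
move=> h.
have -> : 4 * Q * (M ^+ 2 * fine (mu E)) + 4 * X * eta + 2 * delta * (M ^+ 2 * fine (mu E))
  = 4 * X * eta + (4 * Q * M ^+ 2 + 2 * delta * M ^+ 2) * fine (mu E) by ring.
by apply: lerD.
Qed.


Lemma part3 : compact_operator ell2 ell2norm (L2on mu E) (L2norm mu) (Vstar E v).
Proof.
split.
- by move=> c hc; exact: Vstar_L2on.
- move=> a c c' hc hc'; apply/funext => x.
  have e1 : a *: c + c' = (fun k => a * c k + c' k) by [].
  have e2 : (a *: Vstar E v c + Vstar E v c') x = a * Vstar E v c x + Vstar E v c' x by [].
  by rewrite e1 e2 Vstar_lin.
move=> u hu [B hB].
have B2 : forall n N, \sum_(0 <= k < N) (u n k) ^+ 2 <= B ^+ 2.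
  by move=> n; exact: ell2norm_le (hu n) (hB n).
have uk : forall n k, `|u n k| <= 1 + B ^+ 2.
  move=> n k; apply: sq_le_abs; apply: le_trans (B2 n k.+1).
  rewrite big_nat_recr //= lerDr; apply: sumr_ge0 => i _; exact: sqr_ge0.
have [phi [phi_inc cv]] := @diag_extract R (fun n k => u n k) (fun _ => 1 + B ^+ 2) uk.
pose y k := limn (fun n => u (phi n) k).
have hy : forall k, (fun n => u (phi n) k) @ \oo --> y k by move=> k; exact: cv.
have hyB : forall N, \sum_(0 <= k < N) (y k) ^+ 2 <= B ^+ 2.
  move=> N; apply: (@le_of_cvg _ (fun n => \sum_(0 <= k < N) (u (phi n) k) ^+ 2)); last first.
    by move=> n; exact: B2.
  apply: cvg_finsum => k; rewrite expr2; under eq_fun do rewrite expr2.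
  by apply: cvgM; exact: hy.
have hy2 : ell2 y := (ell2_bound hyB).1.
pose dd n k := u (phi n) k - y k.
have hdd : forall n N, \sum_(0 <= k < N) (dd n k) ^+ 2 <= 4 * B ^+ 2.
  move=> n N.
  apply: le_trans (_ : \sum_(0 <= k < N) (2 * (u (phi n) k) ^+ 2 + 2 * (y k) ^+ 2) <= _).
    apply: ler_sum => k _; rewrite /dd -subr_ge0.
    have -> : 2 * u (phi n) k ^+ 2 + 2 * y k ^+ 2 - (u (phi n) k - y k) ^+ 2 =
      (u (phi n) k + y k) ^+ 2 by ring.
    exact: sqr_ge0.
  rewrite big_split /= -!mulr_sumr.
  have -> : 4 * B ^+ 2 = 2 * B ^+ 2 + 2 * B ^+ 2 by ring.
  apply: lerD; apply: ler_wpM2l => //.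
have hdd2 : forall n, ell2 (dd n) by move=> n; exact: (ell2_bound (hdd n)).1.
exists phi, (Vstar E v y); split; [exact: Vstar_L2on | exact: strict_homo |].
have eqn : (fun n => L2norm mu (Vstar E v (u (phi n)) - Vstar E v y)) =
    (fun n => Num.sqrt (Rint (fun x => (Vstar E v (dd n) x) ^+ 2))).
  apply/funext => n; rewrite -L2normE; last exact: (Vstar_L2on (hdd2 n)).1.
  congr (L2norm mu _); apply/funext => x /=.
  have -> : dd n = (fun k => -1 * y k + u (phi n) k).
    by apply/funext => k; rewrite /dd; ring.
  rewrite (Vstar_lin (-1) x hy2 (hu (phi n))).
  have -> : (Vstar E v (u (phi n)) - Vstar E v y) x = Vstar E v (u (phi n)) x - Vstar E v y x by [].
  ring.
rewrite eqn; apply: sqrt_cvg0 => e e0.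
set Cm := M ^+ 2 * fine (mu E).
have Cm0 : 0 <= Cm by rewrite mulr_ge0 ?M2_ge0 // fine_ge0.
have B0 : 0 <= B ^+ 2 by exact: sqr_ge0.
have c30 : (0:R) < 3 by [].
pose eta := e / (3 * (B ^+ 2 + 1)) / 16.
have eta0 : 0 < eta by rewrite /eta !divr_gt0 // mulr_gt0 // ltr_wpDl.
pose delta := e / (3 * (Cm + 1)) / 2.
have delta0 : 0 < delta by rewrite /delta !divr_gt0 // mulr_gt0 // ltr_wpDl.
have [K HK] := tail_small t_ge0 t_sum eta0.
have fin0 : (fun n => \sum_(0 <= k < K) (dd n k) ^+ 2) @ \oo --> \sum_(0 <= k < K) (0:R).
  apply: cvg_finsum => k.
  have h : (fun n => dd n k) @ \oo --> (0:R).
    by rewrite -(subrr (y k)); apply: cvgB => //; exact: cvg_cst.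
  by rewrite -(mul0r 0) ; under eq_fun do rewrite expr2; apply: cvgM.
rewrite big1 // in fin0.
pose th := e / (3 * (Cm + 1)) / 4.
have th0 : 0 < th by rewrite /th !divr_gt0 // mulr_gt0 // ltr_wpDl.
have [n0 _ Hn0] := proj1 (cvgrPdist_le _ _) fin0 _ th0.
exists n0 => // n /Hn0 /= hn.
have hQ : \sum_(0 <= k < K) (dd n k) ^+ 2 <= th.
  by move: hn; rewrite sub0r normrN => /(le_trans (ler_norm _)).
have Q0 : 0 <= \sum_(0 <= k < K) (dd n k) ^+ 2 by apply: sumr_ge0 => k _; exact: sqr_ge0.
apply: le_trans (key_bound (hdd n) HK delta0) _.
have r1 : 4 * (\sum_(0 <= k < K) (dd n k) ^+ 2) * Cm <= e / 3.
  apply: third_le => //; first by rewrite mulr_ge0.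
  by rewrite -ler_pdivlMl // mulrC.
have r2 : 4 * (4 * B ^+ 2) * eta <= e / 3.
  have -> : 4 * (4 * B ^+ 2) * eta = (16 * eta) * B ^+ 2 by ring.
  apply: third_le => //; first by rewrite mulr_ge0 // ltW.
  by rewrite /eta mulrC divfK.
have r3 : 2 * delta * Cm <= e / 3.
  apply: third_le => //; first by rewrite mulr_ge0 // ltW.
  by rewrite /delta mulrC divfK.
apply: le_trans (lerD (lerD r1 r2) r3) _.
have -> : e / 3 + e / 3 + e / 3 = e by field.
by [].
Qed.

End main.

Unset Implicit Arguments.

Theorem lemma2p2 (d : measure_display) (T : measurableType d) (R : realType)
  (mu : {measure set T -> \bar R}) (E : set T)
  (mE : measurable E) (E_pos : (0 < mu E)%E) (E_fin : (mu E < +oo)%E)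
  (v : nat -> T -> R) (v_L2 : forall k, L2 mu (v k)) (M : R)
  (v_bnd : forall x, E x -> (\sum_(k <oo) ((v k x) ^+ 2)%:E <= (M ^+ 2)%:E)%E) :
  compact_operator (L2on mu E) (L2norm mu) ell2 ell2norm (Vop mu v) /\
  ((forall c, ell2 c ->
      (fun n => L2norm mu (Vpartial E v c n - Vstar E v c)) @ \oo --> (0 : R)) /\
   compact_operator ell2 ell2norm (L2on mu E) (L2norm mu) (Vstar E v)).
Proof.
split; first exact: (part1 mE E_fin v_L2 v_bnd).
split; last exact: (part3 mE E_fin v_L2 v_bnd).
by move=> c hc; exact: (part2 mE E_fin v_L2 v_bnd hc).
Qed.
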